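(* Let $\gamma=(\gamma_1,\dots,\gamma_b)$ be a parallel map on $V=V_1\oplus\cdots\oplus V_b$, $V_i\cong(\mathbb F_2)^m$, with $0\gamma=0$. Let $U$ be a subspace of $V$ of dimension $n-1$. Suppose that for every $i\notin J_U$, $\gamma_i$ is differentially $2^r$-uniform with $r<m$ and strongly $(r-1)$-anti-invariant, and for every $j\in J_U$, $\gamma_j$ is differentially $2^r$-uniform with $r<m-1$ and strongly $r$-anti-invariant. If $\gamma$ maps $\mathcal{LA}_U(W_1|W_2)$ onto a non-trivial partition $\mathcal L(W)$, then $W_1$, $W_2$, $W$ are walls and $W_1=W_2=W$; in particular $\mathcal{LA}_U(W_1|W_2)$ is linear.
   Context: Let $m,b>1$, $n=mb$, $V=(\mathbb F_2)^n=V_1\oplus\cdots\oplus V_b$, $V_i\cong(\mathbb F_2)^m$. Permutations act on the right. A parallel map is $\gamma\in\mathrm{Sym}(V)$ with $(v_1\oplus\cdots\oplus v_b)\gamma=v_1\gamma_1\oplus\cdots\oplus v_b\gamma_b$, $\gamma_i\in\mathrm{Sym}(V_i)$. A wall is $\bigoplus_{i\in I}V_i$ with $\emptyset\ne I\subsetneq\{1,\dots,b\}$. $J_U=\{j: V_j\cap U\subsetneq V_j\}$. $f:(\mathbb F_2)^m\to(\mathbb F_2)^m$ is differentially $\delta$-uniform if $\delta=\max_{a\ne0,b}|\{x:f(x+a)+f(x)=b\}|$; for $f(0)=0$, $f$ is strongly $s$-anti-invariant if for all subspaces $U',W'$ with $f(U')=W'$, either $\dim U'=\dim W'<m-s$ or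 $U'=W'=(\mathbb F_2)^m$. A permutation maps $\mathcal A$ onto $\mathcal B$ if it sends the blocks of $\mathcal A$ exactly onto those of $\mathcal B$; trivial partitions are the singleton partition and $\{V\}$. $\mathcal L(W)=\{W+v:v\in V\}$. For subspaces $W_1,W_2\subseteq U$, $\mathcal{LA}_U(W_1|W_2)=\{W_1+v:v\in U\}\cup\{(W_2+\bar v)+v:v\in U\}$ for any $\bar v\in V\setminus U$. *)

(* Defs.v *)
From HB Require Import structures.
From mathcomp Require Import all_boot all_order all_algebra perm.
Set Implicit Arguments. Unset Strict Implicit. Unset Printing Implicit Defensive.
Import GRing.Theory.
Local Open Scope ring_scope.

(* Conventions.
   - F_2^m is 'rV['F_2]_m.
   - V = V_1 (+) ... (+) V_b is the matrix space 'M['F_2]_(b, m):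
     row i of a matrix is its component in V_i = (F_2)^m; n = b * m.
   - Subspaces are {vspace _} (mathcomp vector.v), dimension is \dim.
   - Partitions are sets of blocks, i.e. {set {set V}}.
   - Permutations act on the right; we write (x)gamma as "gamma x". *)

Notation Fm m := 'rV['F_2]_m.
Notation Vsp b m := 'M['F_2]_(b, m).

Definition par_map (b m : nat) (g : 'I_b -> {perm Fm m}) (x : Vsp b m) : Vsp b m :=
  \matrix_(i, j) (g i (row i x)) 0 j.

Definition in_block (b m : nat) (i : 'I_b) (x : Vsp b m) : bool :=
  [forall k : 'I_b, (k != i) ==> (row k x == 0)].

Definition wall (b m : nat) (W : {vspace Vsp b m}) : Prop :=
  exists I : {set 'I_b}, [/\ I != set0, I != setT &
    forall x : Vsp b m, (x \in W) = [forall k : 'I_b, (k \notin I) ==> (row k x == 0)]].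

Definition J_of (b m : nat) (U : {vspace Vsp b m}) : {set 'I_b} :=
  [set j : 'I_b | [exists x : Vsp b m, in_block j x && (x \notin U)]].

Definition diff_unif (m : nat) (f : Fm m -> Fm m) : nat :=
  \max_(a : Fm m | a != 0%R) \max_(c : Fm m) #|[set x : Fm m | (f (x + a) + f x == c)%R]|.

(* strongly s-anti-invariant (f(0) = 0 assumed separately) *)
Definition strongly_anti_inv (m s : nat) (f : Fm m -> Fm m) : Prop :=
  forall U' W' : {vspace Fm m},
    [set f x | x in [set y : Fm m | y \in U']] = [set y : Fm m | y \in W'] ->
    (\dim U' = \dim W' /\ (\dim U' < m - s)%N) \/ (U' = fullv /\ W' = fullv).

Definition coset (b m : nat) (W : {vspace Vsp b m}) (v : Vsp b m) : {set Vsp b m} :=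
  [set x : Vsp b m | x - v \in W].

Definition Lpart (b m : nat) (W : {vspace Vsp b m}) : {set {set Vsp b m}} :=
  [set coset W v | v : Vsp b m].

(* LA_U(W1|W2), computed with a given vbar outside U *)
Definition LApart (b m : nat) (U W1 W2 : {vspace Vsp b m}) (vbar : Vsp b m)
  : {set {set Vsp b m}} :=
  [set coset W1 v | v in [set y : Vsp b m | y \in U]] :|:
  [set coset W2 (vbar + v) | v in [set y : Vsp b m | y \in U]].

Definition maps_onto (T : finType) (g : T -> T) (A B : {set {set T}}) : Prop :=
  [set g @: X | X : {set T} in A] = B.

Definition trivial_partition (T : finType) (P : {set {set T}}) : Prop :=
  P = [set [set x] | x : T] \/ P = [set [set: T]].

(* Main.v *)
Require Import Defs.
From HB Require Import structures.
From mathcomp Require Import all_boot all_order all_algebra perm.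
From mathcomp Require Import finfield zify.
Set Implicit Arguments. Unset Strict Implicit. Unset Printing Implicit Defensive.
Import GRing.Theory.
Local Open Scope ring_scope.

Lemma F2_add_self (x : 'F_2) : x + x = 0.
Proof. apply/val_inj. case: x => [[|[|n]] Hn] /=; rewrite (pdiv_id (isT : prime 2)) //= in Hn *. Qed.

Lemma oppF2 p q (x : 'M['F_2]_(p, q)) : - x = x.
Proof.
apply/matrixP => i j; rewrite mxE.
by apply/eqP; rewrite eq_sym -subr_eq0 opprK F2_add_self.
Qed.

Section Basic.
Variables (b m : nat).
Implicit Types (x y : Vsp b m) (a : Fm m).

Definition emb (i : 'I_b) a : Vsp b m := delta_mx i (0 : 'I_1) *m a.

Lemma row_emb i k a : row k (emb i a) = if k == i then a else 0.
Proof.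
apply/rowP => j; rewrite !mxE big_ord1 !mxE.
by case: (k == i); rewrite ?mul1r ?mul0r ?mxE //.
Qed.

Lemma emb_lin i : linear (emb i).
Proof. move=> c u v; rewrite /emb mulmxDr -scalemxAr //. Qed.

Lemma rowpar (g : 'I_b -> {perm Fm m}) k x : row k (par_map g x) = g k (row k x).
Proof. by apply/rowP => j; rewrite !mxE. Qed.

Lemma sum_emb x : x = \sum_k emb k (row k x).
Proof.
apply/row_matrixP => k; rewrite linear_sum.
rewrite (bigD1 k) //= row_emb eqxx big1 ?addr0 // => i ik.
by rewrite row_emb eq_sym (negbTE ik).
Qed.

End Basic.

Lemma addF2_self p q (x : 'M['F_2]_(p, q)) : x + x = 0.
Proof. by rewrite -{1}(oppF2 x) addNr. Qed.

Lemma count_diff m (f : {perm Fm m}) r (p c : Fm m) (S : {set Fm m}) :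
  (diff_unif f <= 2 ^ r)%N -> p != 0 ->
  (#|S| <= #|[set (f (a + p) + f a + c)%R | a in S]| * 2 ^ r)%N.
Proof.
move=> hdu hp.
set h := fun a => f (a + p) + f a + c.
set T := [set h a | a in S].
rewrite -sum1_card (partition_big h (mem T)); last by move=> a aS; exact: imset_f.
rewrite -sum_nat_const leq_sum // => t _.
rewrite sum1_card (leq_trans _ hdu) //.
rewrite /diff_unif; apply: (leq_trans _ (leq_bigmax_cond (F := fun a => (\max_(c0 : Fm m) #|[set x : Fm m | (f (x + a) + f x == c0)%R]|)%N) _ hp)) => /=.
apply: (leq_trans _ (leq_bigmax (t + c))).
apply: subset_leq_card; apply/subsetP => a; rewrite !inE => /andP [_ /eqP <-].
by rewrite /h -addrA addF2_self addr0.
Qed.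

Section Setting.
Variables (b m : nat) (g : 'I_b -> {perm Fm m}).
Hypothesis hg0 : par_map g 0 = 0.
Local Notation gam := (par_map g).

Lemma g0 k : g k 0 = 0.
Proof. have := rowpar g k 0; rewrite hg0 !row0 => <-; by []. Qed.

Lemma par_emb i a : gam (emb i a) = emb i (g i a).
Proof.
apply/row_matrixP => k; rewrite rowpar !row_emb.
by case: eqP => [-> //|_]; rewrite g0.
Qed.

Lemma par_inj : injective gam.
Proof.
move=> x y hxy; apply/row_matrixP => k.
by apply: (@perm_inj _ (g k)); rewrite -!rowpar hxy.
Qed.

Definition Kvs (i : 'I_b) (X : {vspace Vsp b m}) : {vspace Fm m} :=
  (linfun (mulmx (delta_mx i (0 : 'I_1)) : Fm m -> Vsp b m) @^-1: X)%VS.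

Lemma memK i X a : (a \in Kvs i X) = (emb i a \in X).
Proof. by rewrite -memv_preim lfunE. Qed.

Lemma cardK i X : #|[set a | a \in Kvs i X]| = (2 ^ \dim (Kvs i X))%N.
Proof. by rewrite cardsE card_vspace card_Fp. Qed.


Variables (U W1 W2 W : {vspace Vsp b m}) (vbar : Vsp b m).
Hypothesis hW1U : (W1 <= U)%VS.
Hypothesis hW2U : (W2 <= U)%VS.
Hypothesis hmap : maps_onto gam (LApart U W1 W2 vbar) (Lpart W).

Lemma blk_img X : X \in LApart U W1 W2 vbar -> exists v, gam @: X = coset W v.
Proof.
move=> hX.
have : gam @: X \in Lpart W by rewrite -hmap; apply: imset_f.
by case/imsetP => v _ ->; exists v.
Qed.

Lemma blk_diff X x y : X \in LApart U W1 W2 vbar -> x \in X -> y \in X ->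
  gam x + gam y \in W.
Proof.
move=> /blk_img [v hv] hx hy.
have : gam x \in coset W v by rewrite -hv imset_f.
have : gam y \in coset W v by rewrite -hv imset_f.
rewrite !inE => h1 h2.
have := memvB h2 h1; rewrite opprB addrA subrK.
by rewrite oppF2.
Qed.

Lemma blk1 u : u \in U -> coset W1 u \in LApart U W1 W2 vbar.
Proof. by move=> hu; rewrite inE; apply/orP; left; apply: imset_f; rewrite inE. Qed.

Lemma blk2 u : u \in U -> coset W2 (vbar + u) \in LApart U W1 W2 vbar.
Proof. by move=> hu; rewrite inE; apply/orP; right; apply: imset_f; rewrite inE. Qed.

Lemma D1 u w : u \in U -> w \in W1 -> gam (u + w) + gam u \in W.
Proof.
move=> hu hw; apply: (blk_diff (blk1 hu)); rewrite inE.
  by rewrite addrAC subrr add0r.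
by rewrite subrr rpred0.
Qed.

Lemma D2 u w : u \in U -> w \in W2 -> gam (vbar + u + w) + gam (vbar + u) \in W.
Proof.
move=> hu hw; apply: (blk_diff (blk2 hu)); rewrite inE.
  by rewrite addrAC subrr add0r.
by rewrite subrr rpred0.
Qed.

Lemma coset_set (X : {vspace Vsp b m}) : coset X 0 = [set x | x \in X].
Proof. by apply/setP => x; rewrite !inE subr0. Qed.

Lemma coset_mem (X : {vspace Vsp b m}) v : v \in X -> coset X v = [set x | x \in X].
Proof. by move=> hv; apply/setP => x; rewrite !inE rpredBr. Qed.

Lemma card_coset (X : {vspace Vsp b m}) v : #|coset X v| = #|[set x | x \in X]|.
Proof.
have -> : coset X v = [set x + v | x in [set x | x \in X]].
  apply/setP => y; rewrite inE; apply/idP/imsetP => [h|[x]].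
    by exists (y - v); rewrite ?inE // subrK.
  by rewrite inE => hx ->; rewrite addrK.
by rewrite card_imset //; apply: addIr.
Qed.

Lemma setW_img : [set x | x \in W] = gam @: [set x | x \in W1].
Proof.
have [v hv] := blk_img (blk1 (rpred0 U)).
rewrite coset_set in hv; rewrite hv.
have : gam 0 \in coset W v by rewrite -hv imset_f // inE rpred0.
by rewrite hg0 inE sub0r rpredN => /coset_mem.
Qed.

Lemma cardW1 : #|[set x | x \in W]| = #|[set x | x \in W1]|.
Proof. by rewrite setW_img card_imset //; apply: par_inj. Qed.

Lemma cardW2 : #|[set x | x \in W2]| = #|[set x | x \in W]|.
Proof.
have [v hv] := blk_img (blk2 (rpred0 U)).
rewrite -(card_coset W2 (vbar + 0)) -(card_coset W v) -hv card_imset //.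
exact: par_inj.
Qed.

Lemma W_nz : ~ trivial_partition (Lpart W) -> exists2 w, w \in W & w != 0.
Proof.
move=> ht; case: (boolP [exists x, (x \in W) && (x != 0)]) => [/existsP [w /andP [h1 h2]]|hW].
  by exists w.
exfalso; apply: ht; left.
apply: eq_imset => v; apply/setP => x; rewrite !inE.
apply/idP/idP => [h|/eqP ->]; last by rewrite subrr rpred0.
apply: contraLR hW => hxv; rewrite negbK; apply/existsP; exists (x - v).
by rewrite h subr_eq0.
Qed.

Lemma in_block_emb i (x : Vsp b m) : in_block i x -> x = emb i (row i x).
Proof.
move=> /forallP hb; apply/row_matrixP => k; rewrite row_emb.
by case: eqP => [-> //|/eqP nk]; have := hb k; rewrite nk => /eqP.
Qed.

Lemma emb_in_block (i : 'I_b) (a : Fm m) : in_block i (emb i a).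
Proof. by apply/forallP => k; apply/implyP => nk; rewrite row_emb (negbTE nk). Qed.

Lemma embD (i : 'I_b) (a c : Fm m) : emb i (a + c) = emb i a + emb i c.
Proof. by rewrite /emb mulmxDr. Qed.

Lemma KimgL (i : 'I_b) : [set g i x | x in [set y | y \in Kvs i W1]] = [set y | y \in Kvs i W].
Proof.
apply/setP => y; rewrite inE memK; apply/imsetP/idP => [[x]|].
  rewrite inE memK => hx ->; rewrite -par_emb.
  suff : gam (emb i x) \in [set y | y \in W] by rewrite inE.
  by rewrite setW_img imset_f // inE.
move=> hy; have : emb i y \in [set y | y \in W] by rewrite inE.
rewrite setW_img => /imsetP [x]; rewrite inE => hx hxy.
have ex : x = emb i (row i x).
  apply/row_matrixP => k; rewrite row_emb; case: eqP => [-> //|/eqP nk].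
  by apply: (@perm_inj _ (g k)); rewrite -rowpar -hxy row_emb (negbTE nk) g0.
exists (row i x); first by rewrite inE memK -ex.
by rewrite -rowpar -hxy row_emb eqxx.
Qed.

Lemma KA (i : 'I_b) (S : {set Fm m}) r w :
  (forall a, a \in S -> emb i a \in U) -> (diff_unif (g i) <= 2 ^ r)%N ->
  w \in W1 -> row i w != 0 ->
  (#|S| <= #|[set y | y \in Kvs i W]| * 2 ^ r)%N.
Proof.
move=> hS hdu hw hwi.
apply: (leq_trans (count_diff (g i (row i w)) S hdu hwi)).
rewrite leq_mul2r; apply/orP; right; apply: subset_leq_card.
apply/subsetP => y /imsetP [a aS ->]; rewrite inE memK.
have := memvD (D1 (hS a aS) hw) (D1 (rpred0 U) hw).
congr (_ \in W); apply/row_matrixP => k.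
rewrite !linearD /= !rowpar !linearD /= !row_emb !row0 g0 !add0r addr0.
case: eqP => [-> //|_]; rewrite !add0r.
by rewrite g0 addr0 addF2_self.
Qed.

Lemma KB (i : 'I_b) (S : {set Fm m}) r p :
  (forall a, a \in S -> emb i a \in U) -> (diff_unif (g i) <= 2 ^ r)%N ->
  p \in Kvs i W1 -> p != 0 ->
  (#|S| <= (#|[set y | y \in Kvs i W]| - 1) * 2 ^ r)%N.
Proof.
move=> hS hdu hp hp0.
apply: (leq_trans (count_diff 0 S hdu hp0)).
have h0 : (0 : Fm m) \in [set y | y \in Kvs i W] by rewrite inE rpred0.
rewrite leq_mul2r; apply/orP; right.
rewrite (cardsD1 0 [set y | y \in Kvs i W]) h0 add1n subn1 /=.
apply: subset_leq_card.
apply/subsetP => y /imsetP [a aS ->]; rewrite addr0 !inE memK.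
apply/andP; split.
  apply: contra hp0 => /eqP h.
  have : g i (a + p) = g i a by apply/eqP; rewrite -subr_eq0 oppF2 h.
  by move/perm_inj/(congr1 (fun z => z - a)); rewrite addrAC !subrr add0r => ->.
rewrite memK in hp.
have := D1 (hS a aS) hp.
by rewrite -embD !par_emb -embD.
Qed.

Lemma get_p (i : 'I_b) : (1 < #|[set y | y \in Kvs i W]|)%N ->
  exists2 p, p \in Kvs i W1 & p != 0.
Proof.
have h0 : (0 : Fm m) \in [set y | y \in Kvs i W] by rewrite inE rpred0.
rewrite (cardsD1 0) h0 add1n ltnS card_gt0 => /set0Pn [y].
rewrite !inE => /andP [hy0 hy].
have : y \in [set y | y \in Kvs i W] by rewrite inE.
rewrite -KimgL => /imsetP [p]; rewrite inE => hp hyp.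
exists p => //; apply: contra hy0 => /eqP hp0.
by rewrite hyp hp0 g0.
Qed.

Lemma arith1 (M t k : nat) : (t <= M)%N -> (2 ^ M <= k * 2 ^ t)%N -> (2 ^ (M - t) <= k)%N.
Proof.
move=> htM; rewrite -{1}(subnK htM) expnD leq_pmul2r //.
by rewrite expn_gt0.
Qed.

Lemma arith2 (e : nat) : (0 < e)%N -> (1 < 2 ^ e)%N.
Proof. by move=> he; rewrite -{1}(expn0 2) ltn_exp2l. Qed.

Lemma key_notJ (i : 'I_b) r w : i \notin J_of U ->
  diff_unif (g i) = (2 ^ r)%N -> (r < m)%N -> strongly_anti_inv (r - 1) (g i) ->
  w \in W1 -> row i w != 0 ->
  (forall a, emb i a \in W1) /\ (forall a, emb i a \in W).
Proof.
move=> hi hdu hr hsa hw hwi.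
have hS : forall a, a \in [set: Fm m] -> emb i a \in U.
  move=> a _; move: hi; rewrite inE negb_exists => /forallP /(_ (emb i a)).
  by rewrite emb_in_block /= negbK.
have cT : #|[set: Fm m]| = (2 ^ m)%N by rewrite cardsT card_mx card_Fp // mul1n.
have hdu' : (diff_unif (g i) <= 2 ^ r)%N by rewrite hdu.
have hA := KA hS hdu' hw hwi; rewrite cT in hA.
have k2 : (1 < #|[set y | y \in Kvs i W]|)%N.
  apply: leq_trans (arith1 (ltnW hr) hA); apply: arith2; by rewrite subn_gt0.
have [p hp hp0] := get_p k2.
have hB := KB hS hdu' hp hp0; rewrite cT in hB.
have hB' := arith1 (ltnW hr) hB.
rewrite cardK in hB'.
have hd : (m - r < \dim (Kvs i W))%N.
  rewrite -(ltn_exp2l _ _ (isT : (1 < 2)%N)).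
  have := expn_gt0 2 (\dim (Kvs i W)); lia.
case: (hsa _ _ (KimgL i)) => [[hdd hlt]|[h1 h2]].
  by exfalso; move: hdd hlt hd; rewrite -/(Kvs i W1) => ->; lia.
by split => a; rewrite -memK ?h1 ?h2 memvf.
Qed.

Hypothesis hhyp : forall x y, x \notin U -> y \notin U -> x + y \in U.

Lemma cardS_J (i : 'I_b) a0 : emb i a0 \notin U ->
  (2 ^ m <= 2 * #|[set a | emb i a \in U]|)%N.
Proof.
move=> ha0; set S := [set a | emb i a \in U].
have hC : (#|~: S| <= #|S|)%N.
  rewrite -(card_imset (~: S) (addIr a0)).
  apply: subset_leq_card; apply/subsetP => y /imsetP [a]; rewrite !inE => ha ->.
  by rewrite embD hhyp.
have := cardsC S; rewrite card_mx card_Fp // mul1n => <-.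
lia.
Qed.

Lemma key_J (i : 'I_b) r w : i \in J_of U ->
  diff_unif (g i) = (2 ^ r)%N -> (r < m - 1)%N -> strongly_anti_inv r (g i) ->
  w \in W1 -> row i w != 0 -> False.
Proof.
move=> hi hdu hr hsa hw hwi.
move: hi; rewrite inE => /existsP [x /andP [hbx hxU]].
rewrite (in_block_emb hbx) in hxU; set a0 := row i x in hxU.
set S := [set a | emb i a \in U].
have hS : forall a, a \in S -> emb i a \in U by move=> a; rewrite inE.
have cS := cardS_J hxU; rewrite -/S in cS.
have hdu' : (diff_unif (g i) <= 2 ^ r)%N by rewrite hdu.
have hr1 : (r.+1 <= m)%N by lia.
have hA := KA hS hdu' hw hwi.
have hA' : (2 ^ m <= #|[set y | y \in Kvs i W]| * 2 ^ r.+1)%N.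
  by apply: leq_trans cS _; rewrite expnS mulnCA leq_mul2l hA orbT.
have k2 : (1 < #|[set y | y \in Kvs i W]|)%N.
  apply: leq_trans (arith1 hr1 hA'); apply: arith2; lia.
have [p hp hp0] := get_p k2.
have hB := KB hS hdu' hp hp0.
have hB2 : (2 ^ m <= (#|[set y | y \in Kvs i W]| - 1) * 2 ^ r.+1)%N.
  by apply: leq_trans cS _; rewrite expnS mulnCA leq_mul2l hB orbT.
have hB' := arith1 hr1 hB2.
rewrite cardK in hB'.
have hd : (m - r.+1 < \dim (Kvs i W))%N.
  rewrite -(ltn_exp2l _ _ (isT : (1 < 2)%N)).
  have := expn_gt0 2 (\dim (Kvs i W)); lia.
case: (hsa _ _ (KimgL i)) => [[hdd hlt]|[h1 h2]].
  by move: hdd hlt hd; rewrite -/(Kvs i W1) => ->; lia.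
have : emb i a0 \in W1 by rewrite -memK h1 memvf.
by move/(subvP hW1U); rewrite (negbTE hxU).
Qed.

Variable r : nat.
Hypothesis hnJ : forall i : 'I_b, i \notin J_of U ->
     [/\ diff_unif (g i) = (2 ^ r)%N, (r < m)%N & strongly_anti_inv (r - 1) (g i)].
Hypothesis hJ : forall j : 'I_b, j \in J_of U ->
     [/\ diff_unif (g j) = (2 ^ r)%N, (r < m - 1)%N & strongly_anti_inv r (g j)].

Lemma full_I (i : 'I_b) w : w \in W1 -> row i w != 0 ->
  [/\ forall a, emb i a \in W1, forall a, emb i a \in W & i \notin J_of U].
Proof.
move=> hw hwi; case: (boolP (i \in J_of U)) => hi.
  by have [h1 h2 h3] := hJ hi; case: (key_J hi h1 h2 h3 hw hwi).
have [h1 h2 h3] := hnJ hi; have [k1 k2] := key_notJ hi h1 h2 h3 hw hwi.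
by split.
Qed.

Definition I := [set k : 'I_b | [exists x, (x \in W1) && (row k x != 0)]].

Lemma emb0 (k : 'I_b) : emb k (0 : Fm m) = 0.
Proof. by rewrite /emb mulmx0. Qed.

Lemma W1_char x : (x \in W1) = [forall k, (k \notin I) ==> (row k x == 0)].
Proof.
apply/idP/forallP => [hx k|h].
  apply/implyP; apply: contraR => hk; rewrite inE; apply/existsP; exists x.
  by rewrite hx.
rewrite (sum_emb x); apply: memv_suml => k _.
case: (boolP (k \in I)) => hk.
  move: hk; rewrite inE => /existsP [w /andP [hw hwk]].
  by have [h1 _ _] := full_I hw hwk.
by have := implyP (h k) hk => /eqP ->; rewrite emb0 rpred0.
Qed.

Lemma W1_sub_W x : x \in W1 -> x \in W.
Proof.
move=> hx; rewrite (sum_emb x); apply: memv_suml => k _.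
case: (boolP (k \in I)) => hk.
  move: hk; rewrite inE => /existsP [w /andP [hw hwk]].
  by have [_ h2 _] := full_I hw hwk.
by move: hx; rewrite W1_char => /forallP /(_ k); rewrite hk => /eqP ->; rewrite emb0 rpred0.
Qed.

Lemma eq_card_vs (X Y : {vspace Vsp b m}) : {subset X <= Y} ->
  (#|[set x | x \in Y]| <= #|[set x | x \in X]|)%N -> X = Y.
Proof.
move=> hs hc.
have : [set x | x \in X] == [set x | x \in Y].
  rewrite eqEcard hc andbT; apply/subsetP => x; rewrite !inE; exact: hs.
move/eqP/setP => h; apply/vspaceP => x; have := h x; by rewrite !inE.
Qed.

Lemma W1_eq_W : W1 = W.
Proof. by apply: eq_card_vs; [exact: W1_sub_W | rewrite cardW1]. Qed.

Lemma W2_sub_W1 w : w \in W2 -> w \in W1.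
Proof.
move=> hw; have := D2 (rpred0 U) hw; rewrite -W1_eq_W !W1_char.
move=> /forallP h; apply/forallP => k; apply/implyP => hk.
have := implyP (h k) hk; rewrite linearD /= !rowpar !addr0 linearD /=.
move=> /eqP h1; apply/eqP.
have : g k (row k vbar + row k w) = g k (row k vbar).
  by apply/eqP; rewrite -subr_eq0 oppF2 h1.
by move/perm_inj/(congr1 (fun z => z - row k vbar)); rewrite addrAC !subrr add0r.
Qed.

Lemma W2_eq_W1 : W2 = W1.
Proof.
by apply: eq_card_vs; [exact: W2_sub_W1 | rewrite cardW2 cardW1].
Qed.

End Setting.

Lemma F2_cases (k : 'F_2) : k = 0 \/ k = 1.
Proof. case: k => [[|[|n]] Hn]; [left|right|].
- exact: val_inj.
- by apply: val_inj; rewrite /= (pdiv_id (isT : prime 2)).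
- exfalso; move: Hn; by rewrite (pdiv_id (isT : prime 2)). Qed.

Lemma hyp_of_dim b m (U : {vspace Vsp b m}) : (0 < b * m)%N -> \dim U = (b * m).-1 ->
  forall x y, x \notin U -> y \notin U -> x + y \in U.
Proof.
move=> hbm hdU x y hx hy.
set V' := (U + <[x]>)%VS.
have hxV : x \in V' by rewrite -[x]add0r memv_add ?mem0v ?memv_line.
have hUV : (U <= V')%VS by apply: addvSl.
have hne : U != V' by apply: contraNneq hx => ->.
have hlt : (\dim U < \dim V')%N.
  by rewrite (ltn_leqif (dimv_leqif_eq hUV)) hne.
have hfull : V' = fullv.
  apply/eqP; rewrite eqEdim subvf /=.
  have -> : \dim (fullv : {vspace Vsp b m}) = (b * m)%N by rewrite dimvf.
  lia.
have : y \in V' by rewrite hfull memvf.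
case/memv_addP => u hu [z /vlineP [k ->] hyz]; rewrite hyz in hy *.
case: (F2_cases k) => hk; rewrite hk in hy *.
  by rewrite scale0r addr0 hu in hy.
by rewrite scale1r addrCA addF2_self addr0.
Qed.

Theorem corollary3p11 (m b r : nat) (g : 'I_b -> {perm 'rV['F_2]_m})
    (U W1 W2 W : {vspace 'M['F_2]_(b, m)}) (vbar : 'M['F_2]_(b, m)) :
  (1 < m)%N -> (1 < b)%N ->
  par_map g 0 = 0 ->
  \dim U = (b * m).-1 ->
  (W1 <= U)%VS -> (W2 <= U)%VS -> vbar \notin U ->
  (forall i : 'I_b, i \notin J_of U ->
     [/\ diff_unif (g i) = (2 ^ r)%N, (r < m)%N & strongly_anti_inv (r - 1) (g i)]) ->
  (forall j : 'I_b, j \in J_of U ->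
     [/\ diff_unif (g j) = (2 ^ r)%N, (r < m - 1)%N & strongly_anti_inv r (g j)]) ->
  ~ trivial_partition (Lpart W) ->
  maps_onto (par_map g) (LApart U W1 W2 vbar) (Lpart W) ->
  [/\ wall W1, wall W2, wall W, W1 = W2 /\ W2 = W & LApart U W1 W2 vbar = Lpart W1].
Proof.
move=> hm hb hg0 hdU hW1U hW2U hvbar hnJ hJ hnt hmap.
have hbm : (0 < b * m)%N by rewrite muln_gt0; apply/andP; split; lia.
have hhyp := hyp_of_dim hbm hdU.
have eW := W1_eq_W hg0 hW1U hW2U hmap hhyp hnJ hJ.
have e2 := W2_eq_W1 hg0 hW1U hW2U hmap hhyp hnJ hJ.
have hwall : wall W1.
  exists (I W1); split.
  - have [w hw hw0] := W_nz hnt.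
    rewrite -eW in hw.
    have [k hk] : exists k, row k w != 0.
      apply/existsP; apply: contraR hw0; rewrite negb_exists => /forallP hr.
      rewrite (sum_emb w); apply/eqP; apply: big1 => k _.
      by have := hr k; rewrite negbK => /eqP ->; rewrite emb0.
    apply/set0Pn; exists k; rewrite inE; apply/existsP; exists w; by rewrite hw.
  - have [k hk] : exists k, emb k (row k vbar) \notin U.
      apply/existsP; apply: contraR hvbar; rewrite negb_exists => /forallP hr.
      by rewrite (sum_emb vbar); apply: memv_suml => k _; have := hr k; rewrite negbK.
    have hkJ : k \in J_of U.
      by rewrite inE; apply/existsP; exists (emb k (row k vbar)); rewrite emb_in_block.
    apply/eqP => hI.
    have : k \in I W1 by rewrite hI inE.
    rewrite inE => /existsP [w /andP [hw hwk]].
    have [_ _ hnk] := full_I hg0 hW1U hW2U hmap hhyp hnJ hJ hw hwk.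
    by rewrite hkJ in hnk.
  - by move=> x; apply: (W1_char hg0 hW1U hW2U hmap hhyp hnJ hJ).
split => //; try by rewrite ?e2 -?eW.
apply/setP => X; apply/idP/imsetP.
  rewrite inE => /orP [] /imsetP [v hv ->].
    by exists v.
  by exists (vbar + v); rewrite ?e2.
move=> [v _ ->]; rewrite inE; apply/orP.
case: (boolP (v \in U)) => hv.
  by left; apply: imset_f; rewrite inE.
right; apply/imsetP; exists (vbar + v); first by rewrite inE hhyp.
by rewrite e2 addrA addF2_self add0r.
Qed.
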